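(* Let $G$ be a graph whose $\operatorname{IR}$-graph $H=G(\operatorname{IR})$ is connected, and let $X$ be an $\operatorname{IR}(G)$-set such that either (i) the induced subgraph $G[X]$ has exactly one edge, or (ii) $X$ is independent and at least two vertices of $X$ have $X$-external private neighbours. Then $X$ lies on an induced $4$-cycle of $H$.
   Context: All graphs are finite and simple. For $G=(V,E)$, $D\subseteq V$, $v\in D$: $\operatorname{PN}(v,D)=N[v]-N[D-\{v\}]$ and $\operatorname{EPN}(v,D)=\operatorname{PN}(v,D)-D$; elements of $\operatorname{EPN}(v,D)$ are the $D$-external private neighbours of $v$. $D$ is irredundant if $\operatorname{PN}(v,D)\neq\varnothing$ for all $v\in D$; $\operatorname{IR}(G)$ is the maximum size of an irredundant set; an $\operatorname{IR}(G)$-set is an irredundant set of that size. $G(\operatorname{IR})$ has the $\operatorname{IR}(G)$-sets as vertices, with $D\sim D'$ iff there exist $u\in D$, $v\in D'$ with $uv\in E(G)$ and $D'=(D-\{u\})\cup\{v\}$. *)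

(* Defs.v *)
(* A finite simple graph is a symmetric irreflexive
   relation e : rel T on a finite type T. *)
From mathcomp Require Import all_boot.
Set Implicit Arguments. Unset Strict Implicit. Unset Printing Implicit Defensive.

Section IRGraph.
Variables (T : finType) (e : rel T).

Definition cnbhd (v : T) : {set T} := [set u | (u == v) || e v u].
Definition cnbhd_set (S : {set T}) : {set T} := \bigcup_(v in S) cnbhd v.

Definition PN (v : T) (D : {set T}) : {set T} := cnbhd v :\: cnbhd_set (D :\ v).
Definition EPN (v : T) (D : {set T}) : {set T} := PN v D :\: D.

Definition irredundant (D : {set T}) : bool := [forall v in D, PN v D != set0].

Definition IR : nat := \max_(D : {set T} | irredundant D) #|D|.

Definition IRset (D : {set T}) : bool := irredundant D && (#|D| == IR).

Definition IRadj (D D' : {set T}) : bool :=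
  [&& IRset D, IRset D' &
   [exists u in D, exists v in D', e u v && (D' == (D :\ u) :|: [set v])]].

Definition IRgraph_connected : Prop :=
  forall D D', IRset D -> IRset D' -> connect IRadj D D'.

Definition induced_edges (X : {set T}) : {set {set T}} :=
  [set S : {set T} | (S \subset X) &&
     [exists u, exists v, e u v && (S == [set u; v])]].

Definition independent (X : {set T}) : bool :=
  [forall u in X, forall v in X, ~~ e u v].

Definition on_induced_C4 (X : {set T}) : Prop :=
  exists D1 D2 D3 : {set T},
    [/\ uniq [:: X; D1; D2; D3],
        [/\ IRadj X D1, IRadj D1 D2, IRadj D2 D3 & IRadj D3 X] &
        ~~ IRadj X D2 /\ ~~ IRadj D1 D3].

End IRGraph.

(* Main.v *)
Require Import Defs.
From mathcomp Require Import all_boot.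
Set Implicit Arguments. Unset Strict Implicit. Unset Printing Implicit Defensive.

Section S.
Variables (T : finType) (e : rel T).
Hypotheses (e_sym : symmetric e) (e_irr : irreflexive e).

Lemma irrP (D : {set T}) : (forall w, w \in D -> exists t, (t \in cnbhd e w) /\
   forall z, z \in D -> z != w -> t \notin cnbhd e z) -> irredundant e D.
Proof.
move=> H; apply/forallP => w; apply/implyP => wD.
have [t [t1 t2]] := H w wD.
apply/set0Pn; exists t; rewrite /PN in_setD t1 andbT.
apply/bigcupP => [[z]]; rewrite in_setD1 => /andP[zw zD]; apply/negP.
exact: t2.
Qed.

Lemma epnP x (X : {set T}) x' : x \in X -> x' \in EPN e x X ->
  [/\ x' \notin X, e x x' & forall z, z \in X -> z != x -> (x' != z) && ~~ e z x'].
Proof.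
move=> xX; rewrite /EPN /PN !in_setD => /and3P[nX nB c].
have P z : z \in X -> z != x -> (x' != z) && ~~ e z x'.
  move=> zX zx; have Q : x' \notin cnbhd e z.
    apply/negP => h; move/bigcupP: nB; apply; exists z => //; by rewrite in_setD1 zx.
  by move: Q; rewrite inE negb_or.
split => //; move: c; rewrite inE => /orP[/eqP E|//].
by move: nX; rewrite E xX.
Qed.

Lemma prime_wit x y x' y' (X D : {set T}) :
  x \in X -> y \in X -> x != y -> x' \in EPN e x X -> y' \in EPN e y X ->
  (forall z t, z \in X -> t \in X -> z != x -> z != y -> ~~ e z t) ->
  (forall w, w \in D -> w \notin X -> w = x' \/ w = y') ->
  (x' \in D -> x \notin D) -> (y' \in D -> y \notin D) -> x' \in D ->
  exists t, (t \in cnbhd e x') /\ forall z, z \in D -> z != x' -> t \notin cnbhd e z.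
Proof.
move=> xX yX xy ex ey H sub px py x'D.
have [nx' exx' Px] := epnP xX ex.
have [ny' eyy' Py] := epnP yX ey.
have xD := px x'D.
case yD: (y \in D).
- exists x'; split; first by rewrite inE eqxx.
  move=> z zD zx'.
  have y'D : y' \notin D by apply/negP => /py; rewrite yD.
  have zX : z \in X.
    apply/negPn/negP => /(sub _ zD) [E|E]; first by rewrite E eqxx in zx'.
    by rewrite -E zD in y'D.
  have zx : z != x by apply/negP => /eqP E; rewrite -E zD in xD.
  by rewrite inE negb_or; apply: Px.
- exists x; split; first by rewrite inE e_sym exx' orbT.
  move=> z zD zx'.
  have zx : z != x by apply/negP => /eqP E; rewrite -E zD in xD.
  case zX: (z \in X).
    have zy : z != y by apply/negP => /eqP E; rewrite -E zD in yD.
    by rewrite inE negb_or eq_sym zx H.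
  have [E|E] := sub _ zD (negbT zX); first by rewrite E eqxx in zx'.
  have /andP[a b] := Py _ xX xy.
  by rewrite E inE negb_or eq_sym a e_sym b.
Qed.

Lemma mem_wit x y x' y' (X D : {set T}) w :
  x \in X -> y \in X -> x != y -> x' \in EPN e x X -> y' \in EPN e y X ->
  (forall z t, z \in X -> t \in X -> z != x -> z != y -> ~~ e z t) ->
  (forall w, w \in D -> w \notin X -> w = x' \/ w = y') ->
  (x' \in D -> x \notin D) -> (y' \in D -> y \notin D) -> ~~ ((x \in D) && (y \in D)) ->
  w \in D -> w \in X ->
  exists t, (t \in cnbhd e w) /\ forall z, z \in D -> z != w -> t \notin cnbhd e z.
Proof.
move=> xX yX xy ex ey H sub px py nxy wD wX.
have [nx' exx' Px] := epnP xX ex.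
have [ny' eyy' Py] := epnP yX ey.
exists w; split; first by rewrite inE eqxx.
move=> z zD zw; rewrite inE negb_or eq_sym zw /=.
case zX: (z \in X).
  have [/andP[zx zy]|hz] := boolP ((z != x) && (z != y)); first exact: H.
  have [/andP[wx wy]|hw] := boolP ((w != x) && (w != y)); first by rewrite e_sym H.
  move: hz hw; rewrite !negb_and !negbK => hz hw.
  case/orP: hz => /eqP ?; case/orP: hw => /eqP ?; subst.
  - by rewrite eqxx in zw.
  - by rewrite zD wD in nxy.
  - by rewrite zD wD in nxy.
  - by rewrite eqxx in zw.
have [E|E] := sub _ zD (negbT zX); subst z.
  have wx : w != x by apply/negP => /eqP E; move: (px zD); by rewrite -E wD.
  by rewrite e_sym; case/andP: (Px _ wX wx).
have wy : w != y by apply/negP => /eqP E; move: (py zD); by rewrite -E wD.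
by rewrite e_sym; case/andP: (Py _ wX wy).
Qed.

Lemma irrD x y x' y' (X D : {set T}) :
  x \in X -> y \in X -> x != y -> x' \in EPN e x X -> y' \in EPN e y X ->
  (forall z t, z \in X -> t \in X -> z != x -> z != y -> ~~ e z t) ->
  (forall w, w \in D -> w \notin X -> w = x' \/ w = y') ->
  (x' \in D -> x \notin D) -> (y' \in D -> y \notin D) -> ~~ ((x \in D) && (y \in D)) ->
  irredundant e D.
Proof.
move=> xX yX xy ex ey H sub px py nxy; apply: irrP => w wD.
case wX: (w \in X); first exact: (mem_wit xX yX xy ex ey H sub px py nxy wD wX).
have [E|E] := sub w wD (negbT wX); subst w.
  exact: (prime_wit xX yX xy ex ey H sub px py wD).
apply: (prime_wit yX xX _ ey ex) => //; first by rewrite eq_sym.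
- by move=> z t a b c d; apply: H.
- by move=> u a b; case: (sub u a b); [right|left].
Qed.

Lemma card_swap (X : {set T}) a b : a \in X -> b \notin X -> #|X :\ a :|: [set b]| = #|X|.
Proof.
move=> aX bX; rewrite setUC cardsU1 in_setD1 (negPf bX) andbF /=.
by rewrite (cardsD1 a X) aX.
Qed.

Ltac setdec x y x' y' rr := apply/eqP/setP; let z := fresh "z" in intro z; rewrite !inE;
  (case: (eqVneq z x) => [->|/negbTE ?]; first by rewrite ?eqxx ?rr);
  (case: (eqVneq z y) => [->|/negbTE ?]; first by rewrite ?eqxx ?rr);
  (case: (eqVneq z x') => [->|/negbTE ?]; first by rewrite ?eqxx ?rr);
  (case: (eqVneq z y') => [->|/negbTE ?]; first by rewrite ?eqxx ?rr);
  repeat match goal with H : (z == _) = false |- _ => rewrite H; clear H end;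
  by rewrite /= ?orbF ?andbT.

Lemma c4 x y x' y' (X : {set T}) :
  IRset e X -> x \in X -> y \in X -> x != y -> x' \in EPN e x X -> y' \in EPN e y X ->
  (forall z t, z \in X -> t \in X -> z != x -> z != y -> ~~ e z t) ->
  on_induced_C4 e X.
Proof.
move=> hX xX yX xy ex ey H.
have [nx' exx' Px] := epnP xX ex.
have [ny' eyy' Py] := epnP yX ey.
have x'y' : (x' == y') = false.
  apply/negbTE/negP => /eqP E; case/andP: (Py _ xX xy) => _; by rewrite -E exx'.
have nin a b : a \in X -> b \notin X -> (a == b) = false /\ (b == a) = false.
  move=> aX bX; have ab : a != b by apply/negP => /eqP E; move: bX; rewrite -E aX.
  by rewrite (negbTE ab) eq_sym (negbTE ab).
have [r1 r2] := nin _ _ xX nx'.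
have [r3 r4] := nin _ _ xX ny'.
have [r5 r6] := nin _ _ yX nx'.
have [r7 r8] := nin _ _ yX ny'.
have r9 : (y == x) = false by rewrite eq_sym (negbTE xy).
have r10 : (y' == x') = false by rewrite eq_sym x'y'.
have rr := (negbTE xy, x'y', r1, r2, r3, r4, r5, r6, r7, r8, r9, r10, negbTE nx', negbTE ny', xX, yX).
set D1 := X :\ x :|: [set x'].
set D2 := D1 :\ y :|: [set y'].
set D3 := X :\ y :|: [set y'].
have irr1 : irredundant e D1.
  apply: (irrD xX yX xy ex ey H); rewrite ?inE ?eqxx ?rr //=.
  move=> w; rewrite !inE; case/orP => [/andP[_ wX]|/eqP->]; [by rewrite wX|by left].
have irr2 : irredundant e D2.
  apply: (irrD xX yX xy ex ey H); rewrite ?inE ?eqxx ?rr //=.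
  move=> w; rewrite !inE; case/orP => [/andP[_ /orP[/andP[_ wX]|/eqP->]]|/eqP->]; [by rewrite wX|by left|by right].
have irr3 : irredundant e D3.
  apply: (irrD xX yX xy ex ey H); rewrite ?inE ?eqxx ?rr //=.
  move=> w; rewrite !inE; case/orP => [/andP[_ wX]|/eqP->]; [by rewrite wX|by right].
case/andP: hX => irrX /eqP cX.
have c1 : #|D1| = IR e by rewrite card_swap.
have c3 : #|D3| = IR e by rewrite card_swap.
have c2 : #|D2| = IR e by rewrite card_swap // !inE ?eqxx ?rr.
have I1 : IRset e D1 by rewrite /IRset irr1 c1 eqxx.
have I2 : IRset e D2 by rewrite /IRset irr2 c2 eqxx.
have I3 : IRset e D3 by rewrite /IRset irr3 c3 eqxx.
have IX : IRset e X by rewrite /IRset irrX cX eqxx.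
have neqw (A B : {set T}) z : z \in B -> z \notin A -> A != B.
  by move=> zB zA; apply/negP => /eqP E; move: zA; rewrite E zB.
have n01 : X != D1 by apply: (neqw _ _ x'); rewrite ?inE ?eqxx ?rr ?orbT.
have n02 : X != D2 by apply: (neqw _ _ x'); rewrite ?inE ?eqxx ?rr ?orbT.
have n03 : X != D3 by apply: (neqw _ _ y'); rewrite ?inE ?eqxx ?rr ?orbT.
have n12 : D1 != D2 by apply: (neqw _ _ y'); rewrite ?inE ?eqxx ?rr ?orbT.
have n13 : D1 != D3 by apply: (neqw _ _ y'); rewrite ?inE ?eqxx ?rr ?orbT.
have n23 : D2 != D3 by apply: (neqw _ _ x); rewrite ?inE ?eqxx ?rr ?orbT.
exists D1, D2, D3; split.
- by rewrite /= !inE !negb_or n01 n02 n03 n12 n13 n23.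
- split; rewrite /IRadj ?I1 ?I2 ?I3 ?IX /=; apply/existsP.
  + exists x; rewrite xX /=; apply/existsP; exists x'; by rewrite !inE ?eqxx exx' ?orbT.
  + exists y; rewrite !inE ?rr ?eqxx /=; apply/existsP; exists y'; by rewrite !inE ?eqxx eyy' ?orbT.
  + exists x'; rewrite !inE ?rr ?eqxx /=; apply/existsP; exists x.
    rewrite !inE ?eqxx ?rr (e_sym x' x) exx' /=.
    setdec x y x' y' rr.
  + exists y'; rewrite !inE ?rr ?eqxx /=; apply/existsP; exists y.
    rewrite ?inE ?eqxx ?rr (e_sym y' y) eyy' /=.
    setdec x y x' y' rr.
- split; apply/negP => /and3P[_ _ /existsP[u /andP[uX /existsP[v /andP[vD /andP[_ /eqP E]]]]]].
  + have h1 : x' \in D2 by rewrite ?inE ?eqxx ?rr ?orbT.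
    have h2 : y' \in D2 by rewrite ?inE ?eqxx ?rr ?orbT.
    rewrite E !inE ?eqxx ?rr /= ?andbF /= in h1 h2.
    by move: x'y'; rewrite (eqP h1) (eqP h2) eqxx.
  + have h1 : x \in D3 by rewrite ?inE ?eqxx ?rr ?orbT.
    have h2 : y' \in D3 by rewrite ?inE ?eqxx ?rr ?orbT.
    rewrite E !inE ?eqxx ?rr /= ?andbF /= in h1 h2.
    by move: r3; rewrite (eqP h1) (eqP h2) eqxx.
Qed.

Lemma epn_exists (X : {set T}) u v : irredundant e X -> u \in X -> v \in X -> u != v -> e u v ->
  exists p, p \in EPN e u X.
Proof.
move=> irr uX vX uv euv.
have := forallP irr u; rewrite uX /= => /set0Pn [p pP].
exists p; rewrite /EPN in_setD pP andbT; apply/negP => pX.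
move: pP; rewrite /PN in_setD => /andP[nb _]; move/bigcupP: nb; apply.
case: (eqVneq p u) => [E|pu].
  exists v; first by rewrite in_setD1 eq_sym uv.
  by rewrite inE E e_sym euv orbT.
exists p; first by rewrite in_setD1 pu.
by rewrite inE eqxx.
Qed.
End S.

Unset Implicit Arguments.
Theorem corollary4p3 (T : finType) (e : rel T)
  (e_sym : symmetric e) (e_irr : irreflexive e) (X : {set T}) :
  IRgraph_connected e ->
  IRset e X ->
  (#|induced_edges e X| = 1 \/
   (independent e X /\ 2 <= #|[set v in X | EPN e v X != set0]|)) ->
  on_induced_C4 e X.
Proof.
move=> _ hX [h1|[ind h2]].
- have /cards1P [S ES] : #|induced_edges e X| == 1 by rewrite h1.
  have : S \in induced_edges e X by rewrite ES set11.
  rewrite inE => /andP[SX /existsP[u /existsP[v /andP[euv /eqP SE]]]].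
  have uX : u \in X by apply: (subsetP SX); rewrite SE !inE eqxx.
  have vX : v \in X by apply: (subsetP SX); rewrite SE !inE eqxx orbT.
  have uv : u != v by apply/negP => /eqP E; move: euv; rewrite E e_irr.
  have irrX : irredundant e X by case/andP: hX.
  have [u' hu] := epn_exists e_sym irrX uX vX uv euv.
  have vu : v != u by rewrite eq_sym.
  have evu : e v u by rewrite e_sym.
  have [v' hv] := epn_exists e_sym irrX vX uX vu evu.
  apply: (c4 e_sym hX uX vX uv hu hv) => z t zX tX zu zv; apply/negP => ezt.
  have : [set z; t] \in induced_edges e X.
    rewrite inE; apply/andP; split.
      by apply/subsetP => w; rewrite !inE => /orP[]/eqP->.
    by apply/existsP; exists z; apply/existsP; exists t; rewrite ezt eqxx.
  rewrite ES inE SE => /eqP E.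
  have : z \in [set u; v] by rewrite -E !inE eqxx.
  by rewrite !inE (negbTE zu) (negbTE zv).
- have [x [y [hx hy xy]]] := card_gt1P h2.
  rewrite inE in hx; rewrite inE in hy.
  case/andP: hx => xX /set0Pn [x' hx'].
  case/andP: hy => yX /set0Pn [y' hy'].
  apply: (c4 e_sym hX xX yX xy hx' hy') => z t zX tX _ _.
  by move/forallP: ind => /(_ z); rewrite zX /= => /forallP /(_ t); rewrite tX.
Qed.
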